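(* Let $A\in\mathbb{R}^{n\times d}$, $k\ge1$, $0<\epsilon\le1$ with $10/\epsilon$ an integer, and $t=10/\epsilon+1$. Let $\{0\}=P_0\subseteq P_1\subseteq\cdots\subseteq P_t$ be linear subspaces of $\mathbb{R}^d$ such that for every $i\in[t]$, $$\|A(I-\mathbb{P}_{P_i})\|_{1,2}\le(1+\epsilon)\,\mathrm{SubApx}_{k,1}(A(I-\mathbb{P}_{P_{i-1}})).$$ Then for at least $9/\epsilon$ indices $j\in\{1,\dots,10/\epsilon\}$ the following holds: for every linear subspace $W$ of dimension at most $k$, $$\|A(I-\mathbb{P}_{P_j})\|_{1,2}-\|A(I-\mathbb{P}_{P_j+W})\|_{1,2}\le4\epsilon\,\mathrm{SubApx}_{k,1}(A).$$
   Context: $\|M\|_{1,2}=\sum_i\|M_{i*}\|_2$. $\mathbb{P}_Q$ is the orthogonal projection matrix onto subspace $Q$; $P_j+W$ is the span of $P_j\cup W$. For $M$ with rows in $\mathbb{R}^d$, $\mathrm{SubApx}_{k,1}(M)=\min\{\sum_i\mathrm{dist}(M_{i*},Q):Q\text{ linear subspace},\dim Q\le k\}$. *)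

(* Defs.v *)
(* real numbers modelled by an arbitrary real closed field R. *)
From HB Require Import structures.
From mathcomp Require Import all_boot all_order all_algebra.
Set Implicit Arguments. Unset Strict Implicit. Unset Printing Implicit Defensive.
Import Order.TTheory GRing.Theory Num.Theory.
Local Open Scope ring_scope.

(* A linear subspace of R^d is represented (mxalgebra style) by the row space
   of a matrix Q : 'M[R]_d ; its dimension is \rank Q. *)

Definition norm2 (R : rcfType) (d : nat) (v : 'rV[R]_d) : R :=
  Num.sqrt (\sum_(j < d) v 0 j ^+ 2).

Definition norm12 (R : rcfType) (n d : nat) (M : 'M[R]_(n, d)) : R :=
  \sum_(i < n) norm2 (row i M).

Definition projmx (R : rcfType) (d : nat) (Q : 'M[R]_d) : 'M[R]_d :=
  let B := row_base Q in (B^T *m invmx (B *m B^T) *m B).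

(* sum_i dist(M_i, Q) = ||M (I - P_Q)||_{1,2} *)
Definition subcost (R : rcfType) (n d : nat) (M : 'M[R]_(n, d)) (Q : 'M[R]_d) : R :=
  norm12 (M *m (1%:M - projmx Q)).

(* "y <= c * SubApx_{k,1}(M)", where SubApx_{k,1}(M) is the minimum of
   subcost M Q over subspaces Q with dim Q <= k.  Stated as: y <= c * cost(Q)
   for every admissible Q (equivalent since the minimum is attained, and
   the literal reading of "<= c * inf" in general). *)
Definition le_SubApx (R : rcfType) (n d : nat) (k : nat) (y c : R)
  (M : 'M[R]_(n, d)) : Prop :=
  forall Q : 'M[R]_d, (\rank Q <= k)%N -> y <= c * subcost M Q.

(* Main.v *)
From Stdlib Require Import Classical.
From mathcomp Require Import ring lra zify.
Require Import Defs.
From HB Require Import structures.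
From mathcomp Require Import all_boot all_order all_algebra.
Import Order.TTheory GRing.Theory Num.Theory.
Local Open Scope ring_scope.

Section LA.
Variable R : rcfType.
Variable d : nat.
Implicit Types (u v x q : 'rV[R]_d) (Q : 'M[R]_d).

Definition sq u : R := (u *m u^T) 0 0.

Lemma sqE u : sq u = \sum_(j < d) u 0 j ^+ 2.
Proof. by rewrite /sq mxE; apply: eq_bigr => j _; rewrite mxE expr2. Qed.

Lemma norm2E u : norm2 u = Num.sqrt (sq u).
Proof. by rewrite sqE. Qed.

Lemma sq_ge0 u : 0 <= sq u.
Proof. by rewrite sqE sumr_ge0 // => j _; rewrite sqr_ge0. Qed.

Lemma sq_eq0 u : sq u = 0 -> u = 0.
Proof.
rewrite sqE => /eqP; rewrite psumr_eq0; last by move=> j _; rewrite sqr_ge0.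
move=> /allP H; apply/matrixP => i j; rewrite ord1 mxE.
by have := H j (mem_index_enum _); rewrite sqrf_eq0 => /eqP.
Qed.

Lemma BBt_unit m (B : 'M[R]_(m, d)) : row_free B -> B *m B^T \in unitmx.
Proof.
move=> fB; rewrite -row_free_unit -kermx_eq0 -submx0.
apply/row_subP => i; set w := row i _.
have : (w *m (B *m B^T)) = 0 by apply/sub_kermxP; rewrite row_sub.
move=> H; have H2 : sq (w *m B) = 0.
  by rewrite /sq trmx_mul mulmxA -(mulmxA w) H mul0mx mxE.
have := @sq_eq0 _ H2; rewrite -(mul0mx _ B) => /(row_free_inj fB) ->.
by rewrite sub0mx.
Qed.

Lemma projmx_sub m (X : 'M[R]_(m, d)) Q : (X *m projmx Q <= Q)%MS.
Proof.
rewrite /projmx; set B := row_base Q.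
rewrite mulmxA; apply: (submx_trans (submxMl _ B)).
by rewrite /B (eq_row_base Q).
Qed.

Lemma projmx_id m (X : 'M[R]_(m, d)) Q : (X <= Q)%MS -> X *m projmx Q = X.
Proof.
rewrite -(eq_row_base Q) => /submxP [D ->].
have U := @BBt_unit _ _ (row_base_free Q).
rewrite /projmx; set B := row_base Q; fold B in U.
clearbody B. rewrite -!mulmxA (mulmxA B) (mulmxA (B *m B^T)) (mulmxV U) mul1mx. done.
Qed.

Lemma projmx_sym Q : (projmx Q)^T = projmx Q.
Proof.
rewrite /projmx; set B := row_base Q; clearbody B.
by rewrite !trmx_mul trmx_inv trmx_mul !trmxK mulmxA.
Qed.

Lemma projmx0 : projmx (0 : 'M[R]_d) = 0.
Proof.
by apply/eqP; rewrite -submx0 -[projmx 0]mul1mx projmx_sub.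
Qed.

Lemma orth x (y : 'rV[R]_d) Q : (y <= Q)%MS -> (x - x *m projmx Q) *m y^T = 0.
Proof.
move=> yQ; rewrite mulmxBl -mulmxA.
have -> : projmx Q *m y^T = y^T by rewrite -projmx_sym -trmx_mul (@projmx_id _ y Q yQ).
by rewrite subrr.
Qed.

Lemma sqD a b : (a *m b^T) = 0 -> sq (a + b) = sq a + sq b.
Proof.
move=> H; rewrite /sq linearD /= mulmxDl !mulmxDr H.
have -> : b *m a^T = 0 by rewrite -(trmxK b) -trmx_mul H linear0.
by rewrite addr0 add0r !mxE.
Qed.

Lemma best_approx x Q q : (q <= Q)%MS ->
  norm2 (x *m (1%:M - projmx Q)) <= norm2 (x - q).
Proof.
move=> qQ; rewrite !norm2E ler_sqrt ?sq_ge0 //.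
rewrite mulmxBr mulmx1.
have -> : x - q = (x - x *m projmx Q) + (x *m projmx Q - q) by rewrite addrA subrK.
rewrite (sqD (x - x *m projmx Q) (x *m projmx Q - q)); first by rewrite lerDl sq_ge0.
by apply: orth; rewrite addmx_sub ?projmx_sub // eqmx_opp.
Qed.


Lemma norm12_mono n (A : 'M[R]_(n, d)) Q1 Q2 : (Q1 <= Q2)%MS ->
  norm12 (A *m (1%:M - projmx Q2)) <= norm12 (A *m (1%:M - projmx Q1)).
Proof.
move=> s12; rewrite /norm12; apply: ler_sum => i _; rewrite !row_mul.
set v := row i A.
apply: le_trans (best_approx v Q2 (v *m projmx Q1) _) _.
  by apply: submx_trans s12; apply: projmx_sub.
by rewrite mulmxBr mulmx1.
Qed.

Lemma norm12_key n (A : 'M[R]_(n, d)) Pj W :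
  norm12 (A *m (1%:M - projmx Pj) *m (1%:M - projmx (W *m (1%:M - projmx Pj))))
  <= norm12 (A *m (1%:M - projmx (Pj + W)%MS)).
Proof.
rewrite /norm12; apply: ler_sum => i _; rewrite !row_mul.
set v := row i A.
set r := v *m projmx (Pj + W)%MS.
have : (r <= Pj + W)%MS by apply: projmx_sub.
case/sub_addsmxP => [[u1 u2] /= Er].
set w' := u2 *m (W *m (1%:M - projmx Pj)).
apply: le_trans (best_approx (v *m (1%:M - projmx Pj)) (W *m (1%:M - projmx Pj)) w' (submxMl _ _)) _.
have -> : v *m (1%:M - projmx Pj) - w' = (v - r) *m (1%:M - projmx Pj).
  rewrite mulmxBl Er mulmxDl.
  have -> : u1 *m Pj *m (1%:M - projmx Pj) = 0.
    by rewrite mulmxBr mulmx1 projmx_id ?submxMl // subrr.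
  by rewrite add0r /w' mulmxA.
apply: le_trans (best_approx (v - r) Pj 0 (sub0mx _ _)) _.
by rewrite subr0 /r mulmxBr mulmx1.
Qed.

Lemma norm12_ge0 n m (M : 'M[R]_(n, m)) : 0 <= norm12 M.
Proof. by rewrite /norm12 sumr_ge0 // => i _; rewrite /norm2 sqrtr_ge0. Qed.

End LA.

Theorem mainTheorem11 (R : rcfType) (n d k : nat) (A : 'M[R]_(n, d))
  (eps : R) (m : nat) (P : nat -> 'M[R]_d) :
  (1 <= k)%N ->
  0 < eps -> eps <= 1 ->
  10 / eps = m%:R ->
  P 0%N = 0 ->
  (forall i, (i < m.+1)%N -> (P i <= P i.+1)%MS) ->
  (forall i, (1 <= i <= m.+1)%N ->
     le_SubApx k (norm12 (A *m (1%:M - projmx (P i)))) (1 + eps)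
       (A *m (1%:M - projmx (P i.-1)))) ->
  exists S : seq nat,
    [/\ uniq S, all (fun j => (1 <= j <= m)%N) S,
        9 / eps <= (size S)%:R &
        forall j, j \in S ->
          forall W : 'M[R]_d, (\rank W <= k)%N ->
            le_SubApx k (norm12 (A *m (1%:M - projmx (P j)))
                         - norm12 (A *m (1%:M - projmx (P j + W)%MS)))
              (4 * eps) A].
Proof.
move=> k1 e0 e1 Hm HP0 Hnest Hhyp.
set F := fun j => norm12 (A *m (1%:M - projmx (P j))).
set c := 3 * eps * (1 + eps).
have c0 : 0 <= c by rewrite /c; nra.
have O0 : forall Q : 'M[R]_d, 0 <= subcost A Q by move=> Q; apply: norm12_ge0.
have F0 : forall j, 0 <= F j by move=> j; apply: norm12_ge0.
have H1 : forall Q : 'M[R]_d, (\rank Q <= k)%N -> F 1%N <= (1 + eps) * subcost A Q.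
  move=> Q rQ; have := Hhyp 1%N isT Q rQ.
  by rewrite /= HP0 projmx0 subr0 mulmx1.
have Hmono : forall j, (j < m.+1)%N -> F j.+1 <= F j.
  by move=> j jm; apply: norm12_mono; apply: Hnest.
have HleF1 : forall j, (1 <= j <= m.+1)%N -> F j <= F 1%N.
  elim=> [//|j IH] /andP [_ jm].
  case: j IH jm => [//|j] IH jm.
  apply: le_trans (Hmono _ jm) _; apply: IH; lia.
have Hstep : forall j, (1 <= j <= m)%N -> forall W : 'M[R]_d, (\rank W <= k)%N ->
    F j.+1 <= (1 + eps) * norm12 (A *m (1%:M - projmx (P j + W)%MS)).
  move=> j jm W rW.
  have jm' : (1 <= j.+1 <= m.+1)%N by lia.
  have rW' : (\rank (W *m (1%:M - projmx (P j))) <= k)%N.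
    by apply: leq_trans (mxrankM_maxl _ _) rW.
  apply: le_trans (Hhyp _ jm' _ rW') _.
  rewrite ler_pM2l; last by lra.
  exact: norm12_key.
pose good j := forall W : 'M[R]_d, (\rank W <= k)%N ->
   le_SubApx k (F j - norm12 (A *m (1%:M - projmx (P j + W)%MS))) (4 * eps) A.
have Claim : forall N, (N <= m)%N -> exists S b,
   [/\ uniq S, all (fun j => (1 <= j <= N)%N) S, (forall j, j \in S -> good j),
       (size S + b = N)%N &
       (b = 0%N \/ exists Q : 'M[R]_d, (\rank Q <= k)%N /\
            b%:R * c * subcost A Q < F 1%N - F N.+1)].
  elim=> [_|N IH Nm].
    by exists [::], 0%N; split => //; left.
  have [S [b [uS aS gS sS bS]]] := IH (ltnW Nm).
  have [g|ng] := classic (good N.+1).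
    exists (N.+1 :: S), b; split.
    - rewrite /= uS andbT; apply/negP => /(allP aS) /=; lia.
    - rewrite /= ltnS leqnn /=; apply/allP => j /(allP aS) /=; lia.
    - by move=> j; rewrite inE => /orP [/eqP -> //|]; apply: gS.
    - by rewrite /= addSn sS.
    - case: bS => [-> | [Q [rQ HQ]]]; first by left.
      right; exists Q; split => //.
      apply: lt_le_trans HQ _; rewrite lerD2l lerN2; apply: Hmono; lia.
  have [W [rW nW]] : exists W : 'M[R]_d, (\rank W <= k)%N /\
      ~ le_SubApx k (F N.+1 - norm12 (A *m (1%:M - projmx (P N.+1 + W)%MS))) (4 * eps) A.
    apply: NNPP => H; apply: ng => W rW; apply: NNPP => H2; apply: H; exists W; split => //.
  have [Q [rQ nQ]] : exists Q : 'M[R]_d, (\rank Q <= k)%N /\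
      4 * eps * subcost A Q < F N.+1 - norm12 (A *m (1%:M - projmx (P N.+1 + W)%MS)).
    apply: NNPP => H; apply: nW => Q rQ; apply: NNPP => H2; apply: H; exists Q; split => //.
    by rewrite ltNge; apply/negP.
  set G := norm12 _ in nQ.
  have HS := Hstep N.+1 ltac:(lia) W rW; fold G in HS.
  have HF1 := H1 Q rQ.
  have HFj := HleF1 N.+1 ltac:(lia).
  have HFjj := HleF1 N.+2 ltac:(lia).
  have OQ := O0 Q.
  have key : c * subcost A Q < F N.+1 - F N.+2.
    rewrite /c; nra.
  exists S, b.+1; split => //.
    by apply/allP => j /(allP aS) /=; lia.
    by rewrite -sS addnS.
  right; case: bS => [b0 | [Q0 [rQ0 HQ0]]].
    exists Q; split => //; rewrite b0 mul1r; lra.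
  have OQ0 := O0 Q0.
  have Eb : b.+1%:R = b%:R + 1 :> R by rewrite -natr1.
  have b0 : 0 <= b%:R :> R by rewrite ler0n.
  case: (lerP (subcost A Q0) (subcost A Q)) => hle.
    exists Q0; split => //; rewrite Eb; nra.
  exists Q; split => //; rewrite Eb; nra.
have [S [b [uS aS gS sS bS]]] := Claim m (leqnn m).
exists S; split => //.
have einv : eps * (1 / eps) = 1 by rewrite mul1r divff // gt_eqF.
have Em : m%:R = 10 * (1 / eps) by rewrite -Hm mulrA mulr1.
have -> : 9 / eps = 9 * (1 / eps) by rewrite mulrA mulr1.
have Es : (size S)%:R = m%:R - b%:R :> R by rewrite -sS natrD addrK.
rewrite Es Em.
have ie0 : 0 < 1 / eps by rewrite divr_gt0.
case: bS => [-> | [Q [rQ HQ]]].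
  rewrite subr0; lra.
have HF1 := H1 Q rQ.
have Fm := F0 m.+1.
have OQ := O0 Q.
have b0 : 0 <= b%:R :> R by rewrite ler0n.
have Opos : 0 < subcost A Q.
  rewrite lt0r OQ andbT; apply/negP => /eqP E; rewrite E in HQ HF1; nra.
have hb : b%:R * (3 * eps) < 1.
  have pos : 0 < (1 + eps) * subcost A Q by rewrite mulr_gt0 //; lra.
  rewrite -(ltr_pM2r pos) mul1r.
  have -> : b%:R * (3 * eps) * ((1 + eps) * subcost A Q) = b%:R * c * subcost A Q
    by rewrite /c; ring.
  lra.
nra.
Qed.
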